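(* Let $G=(V,E)$ be a simple 2-vertex-connected graph without irrelevant edges, let $\{u,v\}$ be a 2-vertex-cut of $G$, let $(V_1,V_2)$ with $V_1\ne\emptyset\ne V_2$ be a partition of $V\setminus\{u,v\}$ with no edges of $G$ between $V_1$ and $V_2$, and let $H\subseteq E$ be such that $(V,H)$ is a 2-edge-connected spanning subgraph of $G$. For $i\in\{1,2\}$ let $G_i=G[V_i\cup\{u,v\}]$ and $H_i=E(G_i)\cap H$ (viewed as a subgraph on node set $V_i\cup\{u,v\}$). Then: (1) each of $H_1,H_2$ is of type A, B or C with respect to $\{u,v\}$, and if one of them is of type C then the other is of type A; (2) if $H_i$ is of type C then there is an edge $f\in E(G_i)$ such that $H_i\cup\{f\}$ is of type B; consequently there exists a 2-edge-connected spanning subgraph $H'$ of $G$ such that $H'\cap E(G_i)$ is of type A or B.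
   Context: A graph is 2-edge-connected (2EC) if connected and it stays connected after removal of any one edge; 2-vertex-connected if it has at least 3 nodes, is connected and has no 1-vertex-cut. An edge $xy$ is irrelevant if $\{x,y\}$ is a 2-vertex-cut. For a graph $K$ and nodes $u,v\in V(K)$: the 2EC components of $K$ are its maximal 2EC subgraphs, where a single node not contained in any 2EC subgraph with at least 2 nodes counts as its own (degenerate) 2EC component; let $K'$ be obtained by contracting each 2EC component into a super-node, and let $C(u),C(v)$ be the super-nodes containing $u,v$. $K$ is of type A w.r.t. $\{u,v\}$ if $K'$ is a single super-node $C(u)=C(v)$; of type B if $K'$ is a $C(u)$-$C(v)$ path with at least one edge; of type C if $K'$ consists of exactly two isolated super-nodes $C(u)$ and $C(v)$. *)

(* Defs.v *)
(* Finite simple graphs on a finType T, given by a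
   symmetric irreflexive relation g : rel T; the vertex set V is all of T.
   A (sub)graph K is given by a node set S : {set T} and a symmetric edge
   relation h : rel T; only edges with both ends in S count. *)
From mathcomp Require Import all_boot.
Set Implicit Arguments.
Unset Strict Implicit.
Unset Printing Implicit Defensive.

Section Graphs.
Variable T : finType.

Definition simple_graph (g : rel T) : Prop := symmetric g /\ irreflexive g.

Definition restrict (S : {set T}) (h : rel T) : rel T :=
  [rel a b | [&& a \in S, b \in S & h a b]].

Definition connectedb (S : {set T}) (h : rel T) : bool :=
  [forall x in S, forall y in S, connect (restrict S h) x y].

Definition delEdge (h : rel T) (a b : T) : rel T :=
  [rel x y | h x y && ~~ (((x == a) && (y == b)) || ((x == b) && (y == a)))].

Definition addEdge (h : rel T) (a b : T) : rel T :=
  [rel x y | [|| h x y, (x == a) && (y == b) | (x == b) && (y == a)]].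

Definition twoEC (S : {set T}) (h : rel T) : bool :=
  connectedb S h &&
  [forall a in S, forall b in S, h a b ==> connectedb S (delEdge h a b)].

Definition two_vertex_connected (g : rel T) : Prop :=
  2 < #|T| /\ connectedb setT g /\ forall x : T, connectedb (setT :\ x) g.

Definition two_vertex_cut (g : rel T) (u v : T) : Prop :=
  u != v /\ ~~ connectedb (setT :\: [set u; v]) g.

(* edge xy is irrelevant iff {x,y} is a 2-vertex-cut *)
Definition no_irrelevant_edges (g : rel T) : Prop :=
  forall x y, g x y -> ~ two_vertex_cut g x y.

Definition spanning_2EC_subgraph (g h : rel T) : Prop :=
  symmetric h /\ (forall x y, h x y -> g x y) /\ twoEC setT h.

(* A maximal 2EC subgraph is induced on its node set, so it is
   determined by a node set C maximal w.r.t. inclusion among those inducing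
   a 2EC subgraph; single nodes are (degenerate) 2EC graphs. *)
Definition is2ECcomp (S : {set T}) (h : rel T) (C : {set T}) : bool :=
  [&& C \subset S, C != set0, twoEC C h &
      [forall C' : {set T}, ((C \proper C') && (C' \subset S)) ==> ~~ twoEC C' h]].

(* super-nodes of the contracted graph K' *)
Definition comps (S : {set T}) (h : rel T) : {set {set T}} :=
  [set C | is2ECcomp S h C].

(* number of edges of K joining the (disjoint) node sets C and D, i.e.
   number of parallel edges between super-nodes C and D in K' *)
Definition mult (S : {set T}) (h : rel T) (C D : {set T}) : nat :=
  #|[set p : T * T | [&& p.1 \in C, p.2 \in D, p.1 \in S, p.2 \in S & h p.1 p.2]]|.

Definition typeA (S : {set T}) (h : rel T) (u v : T) : Prop :=
  exists C, comps S h = [set C] /\ u \in C /\ v \in C.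

(* type B: K' is a C(u)-C(v) path with at least one edge *)
Definition typeB (S : {set T}) (h : rel T) (u v : T) : Prop :=
  exists p : seq {set T},
    [/\ uniq p, 2 <= size p, comps S h =i p &
        u \in nth set0 p 0 /\ v \in last set0 p] /\
        (
        forall i j, i < j -> j < size p ->
          mult S h (nth set0 p i) (nth set0 p j) = (j == i.+1 : nat)).

Definition typeC (S : {set T}) (h : rel T) (u v : T) : Prop :=
  exists Cu Cv, [/\ Cu != Cv, comps S h = [set Cu; Cv],
                   u \in Cu, v \in Cv & mult S h Cu Cv = 0].

Definition typeABC (S : {set T}) (h : rel T) (u v : T) : Prop :=
  typeA S h u v \/ typeB S h u v \/ typeC S h u v.

Definition part2 (g hH : rel T) (Si : {set T}) (u v : T) : Prop :=
  typeC Si hH u v ->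
  (exists a b, [/\ g a b, a \in Si, b \in Si & typeB Si (addEdge hH a b) u v])
  /\ (exists hH' : rel T, spanning_2EC_subgraph g hH' /\
                          (typeA Si hH' u v \/ typeB Si hH' u v)).

End Graphs.

(* Main.v *)
Require Import Defs.
From mathcomp Require Import all_boot zify.
Set Implicit Arguments. Unset Strict Implicit. Unset Printing Implicit Defensive.

Lemma arA n m j : j < n + m -> n <= j -> j - n < m. Proof. lia. Qed.
Lemma arB n i j : n <= i -> i < j -> (j == i.+1) = (j - n == (i - n).+1).
Proof. by move=> ? ?; apply/eqP/eqP; lia. Qed.
Lemma arC n i j : n <= i -> i < j -> i - n < j - n. Proof. lia. Qed.
Lemma arD n i j : i < n -> n <= j -> ((i == n.-1) && (j - n == 0)) = (j == i.+1).
Proof. by move=> ? ?; apply/idP/idP => [/andP[/eqP e1 /eqP e2]|/eqP e]; [apply/eqP; lia| apply/andP; split; apply/eqP; lia]. Qed.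

Section Aux.
Variable T : finType.
Implicit Types (S U V W A B C D Z : {set T}) (h r : rel T).

Lemma exitP (e : rel T) (X : {set T}) x y :
  connect e x y -> x \in X -> y \notin X ->
  exists c d, [/\ c \in X, d \notin X & e c d].
Proof.
move/connectP=> [p pth ->] {y}.
elim: p x pth => [|z p IH] x /= pth xX; first by rewrite xX.
case/andP: pth => exz pth.
case zX: (z \in X); first by apply: IH.
by move=> _; exists x, z; rewrite zX.
Qed.

Lemma connect_restrict_mono A B r r' x y :
  A \subset B -> (forall a b, r a b -> r' a b) ->
  connect (restrict A r) x y -> connect (restrict B r') x y.
Proof.
move=> /subsetP AB rr'; apply: connect_sub => a b /and3P[aA bA rab].
by apply: connect1; rewrite /restrict /= (AB _ aA) (AB _ bA) rr'.
Qed.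

Lemma connect_restrict_in W r x y :
  connect (restrict W r) x y -> x \in W -> y \in W.
Proof.
move=> cxy xW; apply/negPn/negP => yW.
have [c [d [cW dW /and3P[_ dW' _]]]] := exitP cxy xW yW.
by rewrite dW' in dW.
Qed.

Lemma delEdge_sub h a b x y : delEdge h a b x y -> h x y.
Proof. by case/andP. Qed.

Lemma sym_restrict_del S h a b : symmetric h -> symmetric (restrict S (delEdge h a b)).
Proof.
move=> sh x y; rewrite /restrict /delEdge /= sh; case: (x \in S); case: (y \in S) => //=.
by case: (x == a); case: (y == b); case: (x == b); case: (y == a).
Qed.

Lemma sym_restrict S h : symmetric h -> symmetric (restrict S h).
Proof.
by move=> sh x y; rewrite /restrict /delEdge /= sh; case: (x \in S); case: (y \in S).
Qed.

Lemma connectedbP S r : reflect (forall x y, x \in S -> y \in S -> connect (restrict S r) x y) (connectedb S r).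
Proof.
apply: (iffP forallP) => [H x y xS yS| H x].
  by move: (H x); rewrite xS /= => /forallP/(_ y); rewrite yS.
by apply/implyP => xS; apply/forallP => y; apply/implyP => yS; apply: H.
Qed.

Lemma twoEC_del S h : symmetric h -> twoEC S h -> forall c d, connectedb S (delEdge h c d).
Proof.
move=> sh /andP[cS /forallP allE] c d.
case: (boolP [&& c \in S, d \in S & h c d]) => [/and3P[cS' dS' hcd]| ncd].
  by move: (allE c) => /implyP/(_ cS')/forallP/(_ d)/implyP/(_ dS')/implyP/(_ hcd).
have E : restrict S (delEdge h c d) =2 restrict S h.
  move=> x y; rewrite /restrict /delEdge /=; case xS: (x \in S); case yS: (y \in S) => //=.
  case hxy: (h x y) => //=; apply/negP => /orP[/andP[/eqP ex /eqP ey]|/andP[/eqP ex /eqP ey]]; subst.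
    by rewrite xS yS hxy in ncd.
  by rewrite xS yS sh hxy in ncd.
apply/connectedbP => x y xS yS; rewrite (eq_connect E).
by move/connectedbP: cS; apply.
Qed.

Lemma twoEC_intro S h : (forall c d, connectedb S (delEdge h c d)) -> twoEC S h.
Proof.
move=> H; apply/andP; split.
  apply/connectedbP => x y xS yS.
  apply: (connect_restrict_mono (subxx S) (@delEdge_sub h x x)).
  by move/connectedbP: (H x x); apply.
apply/forallP => a; apply/implyP=>_; apply/forallP=>b; apply/implyP=>_; apply/implyP=>_.
exact: H.
Qed.


Lemma twoEC_union h A B x : symmetric h -> twoEC A h -> twoEC B h ->
  x \in A -> x \in B -> twoEC (A :|: B) h.
Proof.
move=> sh tA tB xA xB; apply: twoEC_intro => c d; apply/connectedbP => y z yAB zAB.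
have /connectedbP cA := twoEC_del sh tA c d; have /connectedbP cB := twoEC_del sh tB c d.
have sA : A \subset A :|: B := subsetUl A B.
have sB : B \subset A :|: B := subsetUr A B.
apply: (@connect_trans _ _ x).
  case/setUP: yAB => yin.
    by apply: (connect_restrict_mono sA (fun _ _ H => H)); apply: cA.
  by apply: (connect_restrict_mono sB (fun _ _ H => H)); apply: cB.
case/setUP: zAB => zin.
  by apply: (connect_restrict_mono sA (fun _ _ H => H)); apply: cA.
by apply: (connect_restrict_mono sB (fun _ _ H => H)); apply: cB.
Qed.

Lemma compP S h C : reflect [/\ C \subset S, C != set0, twoEC C h &
   forall C', C \proper C' -> C' \subset S -> ~~ twoEC C' h] (C \in comps S h).
Proof.
rewrite inE; apply: (iffP and4P) => [[a b c /forallP d]|[a b c d]]; split => //.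
  by move=> C' p s; move: (d C'); rewrite p s.
by apply/forallP => C'; apply/implyP => /andP[p s]; apply: d.
Qed.

Lemma comps_disj S h C D x : symmetric h -> C \in comps S h -> D \in comps S h ->
  x \in C -> x \in D -> C = D.
Proof.
move=> sh /compP[sC _ tC mC] /compP[sD _ tD mD] xC xD.
have tU := twoEC_union sh tC tD xC xD.
have sU : C :|: D \subset S by rewrite subUset sC sD.
have nD : ~~ (D \proper C :|: D) by apply/negP => p; move: (mD _ p sU); rewrite tU.
have nC : ~~ (C \proper C :|: D) by apply/negP => p; move: (mC _ p sU); rewrite tU.
rewrite properE subsetUr /= negbK subUset subxx andbT in nD.
rewrite properE subsetUl /= negbK subUset subxx /= in nC.
by apply/eqP; rewrite eqEsubset nD nC.
Qed.

Lemma comp_exists S h x : x \in S -> exists2 C, C \in comps S h & x \in C.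
Proof.
move=> xS.
pose P := fun C : {set T} => [&& x \in C, C \subset S & twoEC C h].
have P1 : P [set x].
  rewrite /P set11 sub1set xS /=; apply: twoEC_intro => c d; apply/connectedbP => y z.
  by rewrite !inE => /eqP-> /eqP->; exact: connect0.
case: (arg_maxnP (fun C => #|C|) P1) => C /and3P[xC sC tC] maxC.
exists C => //; apply/compP; split => //.
  by apply/set0Pn; exists x.
move=> C' pC' sC'; apply/negP => tC'.
have : P C' by rewrite /P sC' tC' (subsetP (proper_sub pC')).
by move/maxC => /=; rewrite leqNgt (proper_card pC').
Qed.

Lemma comps_twoEC S h : twoEC S h -> S != set0 -> comps S h = [set S].
Proof.
move=> tS nS; apply/setP => C; rewrite in_set1.
apply/compP/eqP => [[sC nC tC mC]|->]; last first.
  by split => // C' pC' sC'; rewrite properE sC' andbF in pC'.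
apply/eqP; rewrite eqEsubset sC /=; apply: contraT => nSC.
by move: (mC S); rewrite properE sC nSC => /(_ isT (subxx S)); rewrite tS.
Qed.

Lemma closed_comp S h Z : Z \subset S -> Z != set0 -> twoEC Z h ->
  (forall y z, y \in Z -> z \in S -> h y z -> z \in Z) -> Z \in comps S h.
Proof.
move=> sZ nZ tZ cl; apply/compP; split => // C' pC' sC'; apply/negP => tC'.
case/properP: pC' => sZC' [w wC' wZ].
case/set0Pn: nZ => z zZ.
case/andP: tC' => /connectedbP cC' _.
have czw := cC' z w (subsetP sZC' z zZ) wC'.
have [p [q [pZ qZ /and3P[_ qC' hpq]]]] := exitP czw zZ wZ.
by rewrite (cl p q pZ (subsetP sC' q qC') hpq) in qZ.
Qed.

Lemma restrict_closed S Z r x y :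
  (forall y z, y \in Z -> z \in S -> r y z -> z \in Z) -> x \in Z ->
  connect (restrict S r) x y -> connect (restrict Z r) x y.
Proof.
move=> cl xZ /connectP[p pth ->]; elim: p x xZ pth => [|z p IH] x xZ /=.
  by move=> _; exact: connect0.
case/andP=> /and3P[xS zS rxz] pth.
have zZ := cl x z xZ zS rxz.
apply: (@connect_trans _ _ z); last exact: IH.
by apply: connect1; rewrite /restrict /= xZ zZ rxz.
Qed.


Definition Qp S h u v := forall c d x, x \in S ->
  connect (restrict S (delEdge h c d)) x u || connect (restrict S (delEdge h c d)) x v.

Lemma port_comp S h u v : symmetric h -> u \in S -> Qp S h u v ->
  ~~ connect (restrict S h) u v ->
  [set x in S | connect (restrict S h) u x] \in comps S h.
Proof.
move=> sh uS Q nuv; set Cu := [set x in S | _].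
have cl : forall y z, y \in Cu -> z \in S -> h y z -> z \in Cu.
  move=> y z; rewrite !inE => /andP[yS cuy] zS hyz; rewrite zS /=.
  by apply: (connect_trans cuy); apply: connect1; rewrite /restrict /= yS zS hyz.
have uCu : u \in Cu by rewrite inE uS connect0.
apply: closed_comp => //.
- by apply/subsetP => x; rewrite inE => /andP[].
- by apply/set0Pn; exists u.
apply: twoEC_intro => c d; apply/connectedbP => x y xC yC.
have toU : forall z, z \in Cu -> connect (restrict S (delEdge h c d)) z u.
  move=> z; rewrite inE => /andP[zS cuz].
  case/orP: (Q c d z zS) => // czv.
  have : connect (restrict S h) u v.
    apply: (connect_trans cuz).
    exact: (connect_restrict_mono (subxx S) (@delEdge_sub h c d) czv).
  by rewrite (negbTE nuv).
have cl' : forall y z, y \in Cu -> z \in S -> delEdge h c d y z -> z \in Cu.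
  by move=> y' z' ? ? /delEdge_sub; apply: cl.
apply: (restrict_closed cl' xC).
apply: (connect_trans (toU x xC)).
have symD := @sym_restrict_del S h c d sh.
by rewrite (sym_connect_sym symD); exact: toU.
Qed.

Lemma caseC S h u v : symmetric h -> u \in S -> v \in S -> Qp S h u v ->
  ~~ connect (restrict S h) u v -> typeC S h u v.
Proof.
move=> sh uS vS Q nuv.
have symS := @sym_restrict S h sh.
have nvu : ~~ connect (restrict S h) v u by rewrite (sym_connect_sym symS).
have Q' : Qp S h v u by move=> c d x xS; rewrite orbC; apply: Q.
have cu := port_comp sh uS Q nuv. have cv := port_comp sh vS Q' nvu.
set Cu := [set x in S | connect (restrict S h) u x] in cu *.
set Cv := [set x in S | connect (restrict S h) v x] in cv *.
have uCu : u \in Cu by rewrite inE uS connect0.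
have vCv : v \in Cv by rewrite inE vS connect0.
exists Cu, Cv; split => //.
- by apply/eqP => E; move: uCu; rewrite E inE (negbTE nvu) andbF.
- apply/setP => C; rewrite in_set2; apply/idP/idP => [HC|/orP[/eqP->|/eqP->] //].
  have /compP[sC nC _ _] := HC.
  case/set0Pn: nC => x xC; have xS := subsetP sC x xC.
  case/orP: (Q x x x xS) => cx.
    have xCu : x \in Cu.
      rewrite inE xS (sym_connect_sym symS).
      exact: (connect_restrict_mono (subxx S) (@delEdge_sub h x x) cx).
    by rewrite (comps_disj sh HC cu xC xCu) eqxx.
  have xCv : x \in Cv.
    rewrite inE xS (sym_connect_sym symS).
    exact: (connect_restrict_mono (subxx S) (@delEdge_sub h x x) cx).
  by rewrite (comps_disj sh HC cv xC xCv) eqxx orbT.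
- apply/eqP; rewrite cards_eq0; apply/eqP/setP => p; rewrite !inE.
  apply/negP => /and5P[/andP[_ up1] /andP[_ vp2] p1S p2S hp].
  have e12 : connect (restrict S h) p.1 p.2.
    by apply: connect1; rewrite /restrict /= p1S p2S hp.
  rewrite (sym_connect_sym symS) in vp2.
  by move: nuv; rewrite (connect_trans (connect_trans up1 e12) vp2).
Qed.

Lemma typeC_facts S h u v : symmetric h -> typeC S h u v ->
  exists Cu Cv, [/\ Cu :&: Cv = set0, Cu :|: Cv = S, u \in Cu & v \in Cv] /\
    [/\ Cu \in comps S h, Cv \in comps S h &
    forall y z, y \in Cu -> z \in S -> h y z -> z \in Cu].
Proof.
move=> sh [Cu [Cv [ne E uC vC m0]]].
have cu : Cu \in comps S h by rewrite E !inE eqxx.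
have cv : Cv \in comps S h by rewrite E !inE eqxx orbT.
have disj : Cu :&: Cv = set0.
  apply/setP => x; rewrite !inE; apply/negP => /andP[xu xv].
  by move: ne; rewrite (comps_disj sh cu cv xu xv) eqxx.
have cov : Cu :|: Cv = S.
  apply/eqP; rewrite eqEsubset subUset.
  case/compP: cu => -> _ _ _; case/compP: cv => -> _ _ _ /=.
  apply/subsetP => x xS; have [C HC xC] := @comp_exists S h x xS.
  by move: HC; rewrite E !inE => /orP[]/eqP Ce; rewrite -Ce xC ?orbT.
exists Cu, Cv; split => //; split => // y z yC zS hyz.
have : z \in Cu :|: Cv by rewrite cov.
case/setUP => // zC.
have yS : y \in S by rewrite -cov inE yC.
have yz : (y, z) \in [set p : T * T | [&& p.1 \in Cu, p.2 \in Cv, p.1 \in S, p.2 \in S & h p.1 p.2]].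
  by rewrite inE /= yC zC zS yS hyz.
by move/eqP: m0; rewrite /mult cards_eq0 => /eqP E0; rewrite E0 inE in yz.
Qed.

Lemma typeC_disc S h u v : symmetric h -> typeC S h u v -> ~~ connect (restrict S h) u v.
Proof.
move=> sh /(typeC_facts sh)[Cu [Cv [[disj _ uC vC] [_ _ cl]]]].
apply/negP => cuv.
have vnC : v \notin Cu by apply/negP => vC'; move/setP/(_ v): disj; rewrite !inE vC vC'.
have [p [q [pC qC /and3P[_ qS hpq]]]] := exitP cuv uC vnC.
by rewrite (cl p q pC qS hpq) in qC.
Qed.


Definition pathform S h u v (p : seq {set T}) :=
  [/\ uniq p, 0 < size p, comps S h =i p, u \in nth set0 p 0 & v \in last set0 p] /\
  (forall i j, i < j -> j < size p ->
     mult S h (nth set0 p i) (nth set0 p j) = (j == i.+1)).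

Lemma typeA_path S h u v : typeA S h u v -> exists p, pathform S h u v p.
Proof.
case=> C [E [uC vC]]; exists [:: C]; rewrite /pathform; split; [split|] => //.
  by move=> D; rewrite E !inE.
by move=> i j ij; rewrite ltnS leqn0 => /eqP j0; rewrite j0 in ij.
Qed.

Lemma typeB_path S h u v : typeB S h u v -> exists p, pathform S h u v p.
Proof.
case=> p [[uq sz E [uu vv]] m]; exists p; split; [split|] => //.
exact: leq_trans sz.
Qed.

Lemma multE S h C D : C \subset S -> D \subset S ->
  mult S h C D = #|[set p : T * T | [&& p.1 \in C, p.2 \in D & h p.1 p.2]]|.
Proof.
move=> sC sD; rewrite /mult; apply: eq_card => p; rewrite !inE.
case: (boolP (p.1 \in C)) => //= p1; case: (boolP (p.2 \in D)) => //= p2.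
by rewrite (subsetP sC _ p1) (subsetP sD _ p2).
Qed.

Lemma cut S U h a b C x y : symmetric h ->
  (forall x y, x \in U -> y \in S -> y \notin U -> h x y -> x = a /\ y = b) ->
  C \subset S -> twoEC C h -> x \in C -> x \in U -> y \in C -> y \notin U -> False.
Proof.
move=> sh cr sC tC xC xU yC yU.
have /connectedbP cC := twoEC_del sh tC a b.
have cxy := cC x y xC yC.
have [p [q [pU qU /and3P[pC qC /andP[hpq nab]]]]] := exitP cxy xU yU.
have [ep eq] := cr p q pU (subsetP sC q qC) qU hpq.
by rewrite ep eq !eqxx in nab.
Qed.

Lemma comps_split S U h a b C : symmetric h -> U \subset S ->
  (forall x y, x \in U -> y \in S -> y \notin U -> h x y -> x = a /\ y = b) ->
  (C \in comps S h) = (C \in comps U h) || (C \in comps (S :\: U) h).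
Proof.
move=> sh sU cr; apply/idP/orP.
  case/compP => sC nC tC mC; case: (boolP (C \subset U)) => CU.
    left; apply/compP; split=> // C' pC' sC'; exact: mC pC' (subset_trans sC' sU).
  right; apply/compP; split => //.
    apply/subsetP => z zC; rewrite inE (subsetP sC z zC) andbT; apply/negP => zU.
    case/subsetPn: CU => y yC yU; exact: (cut sh cr sC tC zC zU yC yU).
  move=> C' pC' sC'; exact: mC pC' (subset_trans sC' (subsetDl S U)).
case => /compP[sC nC tC mC]; apply/compP.
  split => //; first exact: subset_trans sC sU.
  move=> C' pC' sC'; apply/negP => tC'.
  case: (boolP (C' \subset U)) => C'U; first by move: (mC C' pC' C'U); rewrite tC'.
  case/subsetPn: C'U => y yC' yU; case/set0Pn: nC => x xC.
  exact: (cut sh cr sC' tC' (subsetP (proper_sub pC') x xC) (subsetP sC x xC) yC' yU).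
split => //; first exact: subset_trans sC (subsetDl S U).
move=> C' pC' sC'; apply/negP => tC'.
case: (boolP (C' \subset S :\: U)) => C'U; first by move: (mC C' pC' C'U); rewrite tC'.
case/subsetPn: C'U => y yC' yU; case/set0Pn: nC => x xC.
have yU' : y \in U by move: yU; rewrite inE (subsetP sC' y yC') andbT negbK.
have xU' : x \notin U by move: (subsetP sC x xC); rewrite inE => /andP[].
exact: (cut sh cr sC' tC' yC' yU' (subsetP (proper_sub pC') x xC) xU').
Qed.

Lemma glue S U h u v a b pU pV :
  symmetric h -> U \subset S -> a \in U -> b \in S -> b \notin U -> h a b ->
  (forall x y, x \in U -> y \in S -> y \notin U -> h x y -> x = a /\ y = b) ->
  pathform U h u a pU -> pathform (S :\: U) h b v pV -> typeB S h u v.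
Proof.
move=> sh sU aU bS bU hab cr [[uqU szU eqU uU aL] mU] [[uqV szV eqV bV vV] mV].
have memU k : k < size pU -> nth set0 pU k \in comps U h by move=> ?; rewrite eqU mem_nth.
have memV k : k < size pV -> nth set0 pV k \in comps (S :\: U) h by move=> ?; rewrite eqV mem_nth.
have sCU k : k < size pU -> nth set0 pU k \subset U by move/memU/compP => [].
have sCV k : k < size pV -> nth set0 pV k \subset S :\: U by move/memV/compP => [].
have sVS : S :\: U \subset S := subsetDl S U.
exists (pU ++ pV); split; [split|].
- rewrite cat_uniq uqU uqV andbT /=; apply/hasPn => C CV; apply/negP => CU.
  rewrite -eqU in CU; rewrite -eqV in CV.
  case/compP: CU => sCU' nC _ _; case/compP: CV => sCV' _ _ _.
  case/set0Pn: nC => x xC.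
  by move: (subsetP sCV' x xC); rewrite inE (subsetP sCU' x xC).
- by rewrite size_cat; exact: (leq_add szU szV).
- by move=> C; rewrite mem_cat -eqU -eqV; exact: (comps_split C sh sU cr).
- rewrite nth_cat szU last_cat; split => //; move: vV; by case: (pV) szV.
move=> i j ij; rewrite size_cat => jsz.
case: (ltnP j (size pU)) => jn.
  have i_n : i < size pU by apply: ltn_trans ij jn.
  rewrite !nth_cat i_n jn -(mU i j ij jn).
  rewrite (multE h (subset_trans (sCU i i_n) sU) (subset_trans (sCU j jn) sU)).
  by rewrite (multE h (sCU i i_n) (sCU j jn)).
case: (ltnP i (size pU)) => ni; last first.
  have jV : j - size pU < size pV by apply: arA.
  have iV : i - size pU < size pV by apply: ltn_trans (arC ni ij) jV.
  rewrite !nth_cat (ltnNge i) ni (ltnNge j) jn /=.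
  rewrite (arB ni ij) -(mV (i - size pU) (j - size pU)) //; last exact: arC.
  rewrite (multE h (subset_trans (sCV _ iV) sVS) (subset_trans (sCV _ jV) sVS)).
  by rewrite (multE h (sCV _ iV) (sCV _ jV)).
have jV : j - size pU < size pV by apply: arA.
rewrite !nth_cat ni (ltnNge j) jn /=.
set C := nth set0 pU i; set D := nth set0 pV (j - size pU).
have sC : C \subset U := sCU i ni.
have sD : D \subset S :\: U := sCV _ jV.
rewrite (multE h (subset_trans sC sU) (subset_trans sD sVS)).
have -> : #|[set p : T * T | [&& p.1 \in C, p.2 \in D & h p.1 p.2]]| = (a \in C) && (b \in D).
  case: (boolP ((a \in C) && (b \in D))) => H.
    rewrite /= -(cards1 (a, b)); apply: eq_card => -[x y]; rewrite !inE /=.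
    apply/idP/idP => [/and3P[xC yD hxy]|/eqP[-> ->]]; last by case/andP: H => -> ->.
    have := subsetP sD y yD; rewrite inE => /andP[yU yS].
    by have [-> ->] := cr x y (subsetP sC x xC) yS yU hxy.
  rewrite /=; apply/eqP; rewrite cards_eq0; apply/eqP/setP => -[x y]; rewrite !inE /=.
  apply/negP => /and3P[xC yD hxy].
  have := subsetP sD y yD; rewrite inE => /andP[yU yS].
  have [ex ey] := cr x y (subsetP sC x xC) yS yU hxy.
  by rewrite -ex -ey xC yD in H.
have aC : (a \in C) = (i == (size pU).-1).
  apply/idP/eqP => [aC|e]; last by rewrite /C e nth_last.
  have pn : (size pU).-1 < size pU by rewrite ltn_predL.
  rewrite -nth_last in aL.
  have E := comps_disj sh (memU i ni) (memU _ pn) aC aL.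
  by apply/eqP; move/eqP: E; rewrite nth_uniq.
have bD : (b \in D) = (j - size pU == 0).
  apply/idP/eqP => [bD|e]; last by rewrite /D e.
  have E := comps_disj sh (memV _ jV) (memV 0 szV) bD bV.
  by apply/eqP; move/eqP: E; rewrite nth_uniq.
by rewrite aC bD (arD ni jn).
Qed.


Lemma port S W r p1 p2 x t :
  (forall y z, y \in W -> z \in S -> z \notin W -> r y z -> (y == p1) || (y == p2)) ->
  x \in W -> connect (restrict S r) x t ->
  [|| connect (restrict W r) x t, connect (restrict W r) x p1 | connect (restrict W r) x p2].
Proof.
move=> pt xW cxt; apply: contraT; rewrite !negb_or => /and3P[nt n1 n2].
set Z := [set z | connect (restrict W r) x z].
have xZ : x \in Z by rewrite inE connect0.
have tZ : t \notin Z by rewrite inE.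
have [y [z [yZ zZ /and3P[yS zS ryz]]]] := exitP cxt xZ tZ.
move: yZ zZ; rewrite !inE => cy cz.
have yW : y \in W by exact: connect_restrict_in cy xW.
case: (boolP (z \in W)) => zW.
  by rewrite (connect_trans cy (connect1 _)) // /restrict /= yW zW ryz in cz.
case/orP: (pt y z yW zS zW ryz) => /eqP e; rewrite e in cy.
  by rewrite cy in n1.
by rewrite cy in n2.
Qed.

Lemma twoEC_of_Q S h u v : symmetric h -> Qp S h u v ->
  (forall c d, connect (restrict S (delEdge h c d)) u v) -> twoEC S h.
Proof.
move=> sh Q cuv; apply: twoEC_intro => c d; apply/connectedbP => x y xS yS.
have symD := @sym_restrict_del S h c d sh.
have cvu' : connect (restrict S (delEdge h c d)) v u by rewrite (sym_connect_sym symD).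
have toU : forall z, z \in S -> connect (restrict S (delEdge h c d)) z u.
  move=> z zS; case/orP: (Q c d z zS) => // czv; exact: connect_trans czv cvu'.
apply: connect_trans (toU x xS) _; rewrite (sym_connect_sym symD); exact: toU.
Qed.

Lemma ABC n S h u v : symmetric h -> #|S| <= n -> u \in S -> v \in S -> Qp S h u v ->
  typeA S h u v \/ typeB S h u v \/ typeC S h u v.
Proof.
move=> sh; elim: n S u v => [|n IH] S u v szS uS vS Q.
  by move: szS; rewrite leqn0 cards_eq0 => /eqP S0; rewrite S0 inE in uS.
case: (boolP (connect (restrict S h) u v)) => cuv; last by right; right; exact: caseC.
case: (boolP [forall c, forall d, connect (restrict S (delEdge h c d)) u v]) => [/forallP allc|].
  left; have tS := twoEC_of_Q sh Q (fun c d => (forallP (allc c)) d).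
  exists S; split; last by [].
  by apply: comps_twoEC => //; apply/set0Pn; exists u.
rewrite negb_forall => /existsP[c]; rewrite negb_forall => /existsP[d ncd].
right; left.
set U := [set x in S | connect (restrict S (delEdge h c d)) u x].
have uU : u \in U by rewrite inE uS connect0.
have vU : v \notin U by rewrite inE (negbTE ncd) andbF.
have sU : U \subset S by apply/subsetP => x; rewrite inE => /andP[].
have ext : forall x y, x \in U -> y \in S -> delEdge h c d x y -> y \in U.
  move=> x y; rewrite !inE => /andP[xS cx] yS dxy; rewrite yS /=.
  by apply: connect_trans cx (connect1 _); rewrite /restrict /= xS yS dxy.
have crcd : forall x y, x \in U -> y \in S -> y \notin U -> h x y ->
   ((x == c) && (y == d)) || ((x == d) && (y == c)).
  move=> x y xU yS yU hxy; apply: contraR yU => nx; apply: (ext x y xU yS).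
  by rewrite /delEdge /= hxy nx.
have [a [b [aU bU /and3P[aS bS hab]]]] := exitP cuv uU vU.
have cr : forall x y, x \in U -> y \in S -> y \notin U -> h x y -> x = a /\ y = b.
  move=> x y xU yS yU hxy.
  have := crcd x y xU yS yU hxy; have := crcd a b aU bS bU hab.
  case/orP => /andP[/eqP ea /eqP eb]; case/orP => /andP[/eqP ex /eqP ey]; subst;
    first [done | by rewrite xU in bU].
set V := S :\: U.
have bV : b \in V by rewrite inE bU bS.
have vV : v \in V by rewrite inE vU vS.
have uV : u \notin V by rewrite inE uU.
have sV : V \subset S := subsetDl S U.
have QU : Qp U h u a.
  move=> c' d' x xU.
  have pt : forall y z, y \in U -> z \in S -> z \notin U -> delEdge h c' d' y z ->
      (y == u) || (y == a).
    by move=> y z yU zS zU /delEdge_sub hyz; have [-> _] := cr y z yU zS zU hyz; rewrite eqxx orbT.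
  case/orP: (Q c' d' x (subsetP sU x xU)) => ct; have := port pt xU ct.
    by rewrite orbA orbb.
  case/orP => [cv|//]; have := connect_restrict_in cv xU; by rewrite (negbTE vU).
have QV : Qp V h b v.
  move=> c' d' x xV.
  have pt : forall y z, y \in V -> z \in S -> z \notin V -> delEdge h c' d' y z ->
      (y == b) || (y == v).
    move=> y z yV zS zV /delEdge_sub hyz.
    have zU : z \in U by move: zV; rewrite inE zS andbT negbK.
    have yU : y \notin U by move: yV; rewrite inE => /andP[].
    by have [_ ->] := cr z y zU (subsetP sV y yV) yU (etrans (sh z y) hyz); rewrite eqxx.
  case/orP: (Q c' d' x (subsetP sV x xV)) => ct; have := port pt xV ct.
    by case/orP => [cu|//]; have := connect_restrict_in cu xV; rewrite (negbTE uV).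
  by case/or3P => ->; rewrite ?orbT.
have ua : connect (restrict U h) u a.
  have pt : forall y z, y \in U -> z \in S -> z \notin U -> h y z -> (y == a) || (y == a).
    by move=> y z yU zS zU hyz; have [-> _] := cr y z yU zS zU hyz; rewrite eqxx.
  case/or3P: (port pt uU cuv) => // cv; have := connect_restrict_in cv uU; by rewrite (negbTE vU).
have bv : connect (restrict V h) b v.
  have pt : forall y z, y \in V -> z \in S -> z \notin V -> h y z -> (y == b) || (y == b).
    move=> y z yV zS zV hyz.
    have zU : z \in U by move: zV; rewrite inE zS andbT negbK.
    have yU : y \notin U by move: yV; rewrite inE => /andP[].
    by have [_ ->] := cr z y zU (subsetP sV y yV) yU (etrans (sh z y) hyz); rewrite eqxx.
  have cvu : connect (restrict S h) v u by rewrite (sym_connect_sym (sym_restrict S sh)).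
  case/or3P: (port pt vV cvu) => [cu|cb|cb].
  - by have := connect_restrict_in cu vV; rewrite (negbTE uV).
  - by rewrite (sym_connect_sym (sym_restrict V sh)).
  - by rewrite (sym_connect_sym (sym_restrict V sh)).
have szU : #|U| <= n.
  have : #|U| < #|S| by apply: proper_card; apply/properP; split => //; exists v.
  by move=> lt; rewrite -ltnS; apply: leq_trans lt szS.
have szV : #|V| <= n.
  have : #|V| < #|S| by apply: proper_card; apply/properP; split => //; exists u.
  by move=> lt; rewrite -ltnS; apply: leq_trans lt szS.
have [pU hpU] : exists p, pathform U h u a p.
  case: (IH U u a szU uU aU QU) => [/typeA_path|[/typeB_path|/(typeC_disc sh)]] //.
  by rewrite ua.
have [pV hpV] : exists p, pathform V h b v p.
  case: (IH V b v szV bV vV QV) => [/typeA_path|[/typeB_path|/(typeC_disc sh)]] //.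
  by rewrite bv.
exact: (glue sh sU aU bS bU hab cr hpU hpV).
Qed.


Lemma twoEC_mono C h h' : symmetric h -> (forall x y, h x y -> h' x y) ->
  twoEC C h -> twoEC C h'.
Proof.
move=> sh hh' tC; apply: twoEC_intro => c d; apply/connectedbP => x y xC yC.
apply: (@connect_restrict_mono C C (delEdge h c d) (delEdge h' c d) x y (subxx C)).
  by move=> p q /andP[hpq n]; rewrite /delEdge /= hh'.
by have /connectedbP := twoEC_del sh tC c d; apply.
Qed.

Lemma find_edge g S A B x y w z : A :&: B = set0 -> A :|: B = S -> y \in B ->
  w \in A -> w != x -> z \notin S -> z != x -> connectedb (setT :\ x) g ->
  (forall p q, p \in S -> p != x -> p != y -> q \notin S -> ~~ g p q) ->
  exists p q, [/\ p \in A, q \in B & g p q].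
Proof.
move=> disj cov yB wA wx zS zx /connectedbP cg nog.
have wX : w \in setT :\ x by rewrite !inE wx.
have zX : z \in setT :\ x by rewrite !inE zx.
have czw := cg w z wX zX.
have zA : z \notin A by apply: contra zS => zA; rewrite -cov inE zA.
have [p [q [pA qA /and3P[pX qX gpq]]]] := exitP czw wA zA.
exists p, q; split => //.
  case: (boolP (q \in S)) => qS; first by move: qS; rewrite -cov inE (negbTE qA).
  have pS : p \in S by rewrite -cov inE pA.
  have px : p != x by move: pX; rewrite !inE => /andP[].
  have py : p != y by apply/eqP => e; move/setP/(_ p): disj; rewrite !inE pA e yB.
  by move: (nog p q pS px py qS); rewrite gpq.
Qed.

Lemma part2_side g hH u v S w z :
  simple_graph g -> spanning_2EC_subgraph g hH ->
  connectedb (setT :\ u) g -> connectedb (setT :\ v) g ->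
  w \in S -> w != u -> w != v -> z \notin S -> z != u -> z != v ->
  (forall p q, p \in S -> p != u -> p != v -> q \notin S -> ~~ g p q) ->
  part2 g hH S u v.
Proof.
move=> [gs gi] [hs [hg tH]] cu cv wS wu wv zS zu zv nog tC.
have [Cu [Cv [[disj cov uC vC] [cuC cvC cl]]]] := typeC_facts hs tC.
have [a [b [aC bC gab]]] : exists a b, [/\ a \in Cu, b \in Cv & g a b].
  have : w \in Cu :|: Cv by rewrite cov.
  case/setUP => wC.
    exact: (find_edge disj cov vC wC wu zS zu cu nog).
  have disj' : Cv :&: Cu = set0 by rewrite setIC.
  have cov' : Cv :|: Cu = S by rewrite setUC.
  have nog' : forall p q, p \in S -> p != v -> p != u -> q \notin S -> ~~ g p q.
    by move=> p q pS pv pu; apply: nog.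
  have [p [q [pC qC gpq]]] := find_edge disj' cov' uC wC wv zS zv cv nog'.
  by exists q, p; rewrite gs.
pose h' := addEdge hH a b.
have sh' : symmetric h'.
  move=> x y; rewrite /h' /addEdge /= hs.
  by case: (hH y x); case: (x == a); case: (y == b); case: (x == b); case: (y == a).
have hh' : forall x y, hH x y -> h' x y by move=> x y hxy; rewrite /h' /addEdge /= hxy.
have bnC : b \notin Cu by apply/negP => bu; move/setP/(_ b): disj; rewrite !inE bu bC.
have sCu : Cu \subset S by case/compP: cuC.
have sCv : Cv \subset S by case/compP: cvC.
have bS : b \in S := subsetP sCv b bC.
have h'ab : h' a b by rewrite /h' /addEdge /= !eqxx orbT.
have cr : forall x y, x \in Cu -> y \in S -> y \notin Cu -> h' x y -> x = a /\ y = b.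
  move=> x y xC yS yC; rewrite /h' /addEdge /=.
  case/or3P => [hxy|/andP[/eqP-> /eqP->]//|/andP[/eqP ex /eqP ey]].
    by rewrite (cl x y xC yS hxy) in yC.
  by rewrite -ex xC in bnC.
have SCu : S :\: Cu = Cv.
  apply/setP => x; rewrite !inE -cov !inE.
  case xu: (x \in Cu) => //=.
  by apply/esym/negbTE/negP => xv; move/setP/(_ x): disj; rewrite !inE xu xv.
have tCu : twoEC Cu h' by apply: (twoEC_mono hs hh'); case/compP: cuC.
have tCv : twoEC Cv h' by apply: (twoEC_mono hs hh'); case/compP: cvC.
have [pU hpU] : exists p, pathform Cu h' u a p.
  apply: typeA_path; exists Cu; split => //.
  by apply: comps_twoEC => //; apply/set0Pn; exists u.
have [pV hpV] : exists p, pathform (S :\: Cu) h' b v p.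
  rewrite SCu; apply: typeA_path; exists Cv; split => //.
  by apply: comps_twoEC => //; apply/set0Pn; exists v.
have tB : typeB S h' u v := glue sh' sCu aC bS bnC h'ab cr hpU hpV.
split; first by exists a, b; split => //; [exact: subsetP sCu a aC].
exists h'; split; last by right.
split => //; split.
  move=> x y; rewrite /h' /addEdge /=.
  case/or3P => [/hg //|/andP[/eqP-> /eqP->] //|/andP[/eqP-> /eqP->]]; by rewrite gs.
exact: (twoEC_mono hs hh' tH).
Qed.

Lemma Q_side (g hH : rel T) S u v t : symmetric hH -> (forall x y, hH x y -> g x y) ->
  twoEC setT hH -> t \notin S ->
  (forall p q, p \in S -> p != u -> p != v -> q \notin S -> ~~ g p q) -> Qp S hH u v.
Proof.
move=> hs hg tH tS nog c d x xS.
have /connectedbP cc := twoEC_del hs tH c d.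
have cxt := cc x t (in_setT x) (in_setT t).
have pt : forall y z, y \in S -> z \in setT -> z \notin S -> delEdge hH c d y z ->
    (y == u) || (y == v).
  move=> y z yS _ zS /delEdge_sub/hg gyz; apply: contraT; rewrite negb_or => /andP[yu yv].
  by move: (nog y z yS yu yv zS); rewrite gyz.
case/or3P: (port pt xS cxt) => [ct|->|->]; rewrite ?orbT //.
by have := connect_restrict_in ct xS; rewrite (negbTE tS).
Qed.


Lemma other (g hH : rel T) u v S1 S2 c d : symmetric hH -> (forall x y, hH x y -> g x y) ->
  twoEC setT hH -> ~~ connect (restrict S1 hH) u v -> u \in S1 -> u \in S2 -> v \in S2 ->
  (forall z, z \notin S1 -> z \in S2) -> (forall z, z \notin S2 -> z \in S1) ->
  (forall p q, p \in S1 -> p != u -> p != v -> q \notin S1 -> ~~ g p q) ->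
  (forall p q, p \in S2 -> p != u -> p != v -> q \notin S2 -> ~~ g p q) ->
  connect (restrict S2 (delEdge hH c d)) u v.
Proof.
move=> hs hg tH nuv uS1 uS2 vS2 c12 c21 n1 n2.
set Z := [set z | connect (restrict S2 (delEdge hH c d)) u z].
set R := [set z | connect (restrict S1 hH) u z].
apply: contraT => nv.
have vZ : v \notin Z by rewrite inE.
have vR : v \notin R by rewrite inE.
have uY : u \in Z :|: R by rewrite in_setU inE connect0.
have vY : v \notin Z :|: R by rewrite in_setU negb_or vZ vR.
have /connectedbP cc := twoEC_del hs tH c d.
have [y [z [yY zY /and3P[_ _ ryz]]]] := exitP (cc u v (in_setT u) (in_setT v)) uY vY.
have hyz : hH y z := delEdge_sub ryz.
have gyz : g y z := hg _ _ hyz.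
move: zY; rewrite in_setU negb_or => /andP[zZ zR].
case/setUP: yY => [yZ|yR].
  have yZ' : connect (restrict S2 (delEdge hH c d)) u y by move: yZ; rewrite inE.
  have yS2 : y \in S2 := connect_restrict_in yZ' uS2.
  case: (boolP (z \in S2)) => zS2.
    have e1 : restrict S2 (delEdge hH c d) y z by rewrite /restrict /= yS2 zS2 ryz.
    by move: zZ; rewrite inE (connect_trans yZ' (connect1 e1)).
  have : (y == u) || (y == v).
    apply: contraT; rewrite negb_or => /andP[yu yv].
    by move: (n2 y z yS2 yu yv zS2); rewrite gyz.
  case/orP => /eqP ey; rewrite ey in hyz yZ.
    have e1 : restrict S1 hH u z by rewrite /restrict /= uS1 (c21 z zS2) hyz.
    by move: zR; rewrite inE (connect1 e1).
  by rewrite yZ in vZ.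
have yR' : connect (restrict S1 hH) u y by move: yR; rewrite inE.
have yS1 : y \in S1 := connect_restrict_in yR' uS1.
case: (boolP (z \in S1)) => zS1.
  have e1 : restrict S1 hH y z by rewrite /restrict /= yS1 zS1 hyz.
  by move: zR; rewrite inE (connect_trans yR' (connect1 e1)).
have : (y == u) || (y == v).
  apply: contraT; rewrite negb_or => /andP[yu yv].
  by move: (n1 y z yS1 yu yv zS1); rewrite gyz.
case/orP => /eqP ey; rewrite ey in ryz yR.
  have e1 : restrict S2 (delEdge hH c d) u z by rewrite /restrict /= uS2 (c12 z zS1) ryz.
  by move: zZ; rewrite inE (connect1 e1).
by rewrite yR in vR.
Qed.

Lemma side (g hH : rel T) u v V1 V2 :
  simple_graph g -> two_vertex_connected g -> u != v ->
  V1 :|: V2 = ~: [set u; v] -> V1 :&: V2 = set0 -> V1 != set0 -> V2 != set0 ->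
  (forall x y, x \in V1 -> y \in V2 -> ~~ g x y) -> spanning_2EC_subgraph g hH ->
  [/\ typeABC (V1 :|: [set u; v]) hH u v,
      typeC (V1 :|: [set u; v]) hH u v -> typeA (V2 :|: [set u; v]) hH u v &
      part2 g hH (V1 :|: [set u; v]) u v].
Proof.
move=> sg [_ [_ cg]] uv cov disj n1 n2 noE sp.
have [gs gi] := sg. have [hs [hg tH]] := sp.
set S1 := V1 :|: [set u; v]; set S2 := V2 :|: [set u; v].
have inV : forall x, (x \in V1) || (x \in V2) = (x != u) && (x != v).
  by move=> x; rewrite -in_setU cov !inE negb_or.
have uS1 : u \in S1 by rewrite !inE eqxx !orbT.
have vS1 : v \in S1 by rewrite !inE eqxx !orbT.
have uS2 : u \in S2 by rewrite !inE eqxx !orbT.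
have vS2 : v \in S2 by rewrite !inE eqxx !orbT.
have V1V2 : forall x, x \in V1 -> x \in V2 -> False.
  by move=> x a b; move/setP/(_ x): disj; rewrite !inE a b.
have V1uv : forall x, x \in V1 -> (x != u) && (x != v) by move=> x xV; rewrite -inV xV.
have V2uv : forall x, x \in V2 -> (x != u) && (x != v) by move=> x xV; rewrite -inV xV orbT.
have nS1 : forall z, z \notin S1 -> z \in V2.
  move=> z; rewrite !inE !negb_or => /and3P[z1 zu zv].
  by have := inV z; rewrite zu zv (negbTE z1).
have nS2 : forall z, z \notin S2 -> z \in V1.
  move=> z; rewrite !inE !negb_or => /and3P[z1 zu zv].
  by have := inV z; rewrite zu zv (negbTE z1) orbF.
have c12 : forall z, z \notin S1 -> z \in S2 by move=> z /nS1 zV; rewrite !inE zV.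
have c21 : forall z, z \notin S2 -> z \in S1 by move=> z /nS2 zV; rewrite !inE zV.
have E1 : forall p q, p \in S1 -> p != u -> p != v -> q \notin S1 -> ~~ g p q.
  move=> p q pS pu pv qS.
  have pV : p \in V1 by move: pS; rewrite !inE (negbTE pu) (negbTE pv) !orbF.
  exact: noE pV (nS1 q qS).
have E2 : forall p q, p \in S2 -> p != u -> p != v -> q \notin S2 -> ~~ g p q.
  move=> p q pS pu pv qS.
  have pV : p \in V2 by move: pS; rewrite !inE (negbTE pu) (negbTE pv) !orbF.
  rewrite gs; exact: noE (nS2 q qS) pV.
case/set0Pn: n1 => w1 w1V; case/set0Pn: n2 => w2 w2V.
case/andP: (V1uv w1 w1V) => w1u w1v; case/andP: (V2uv w2 w2V) => w2u w2v.
have w1S1 : w1 \in S1 by rewrite !inE w1V.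
have w1S2 : w1 \notin S2.
  rewrite !inE (negbTE w1u) (negbTE w1v) !orbF; apply/negP => /(V1V2 w1 w1V) //.
have w2S1 : w2 \notin S1.
  rewrite !inE (negbTE w2u) (negbTE w2v) !orbF; apply/negP => w2V1.
  exact: V1V2 w2 w2V1 w2V.
have Q1 : Qp S1 hH u v := Q_side hs hg tH w2S1 E1.
split.
- exact: (ABC hs (leqnn _) uS1 vS1 Q1).
- move=> tC; have nuv := typeC_disc hs tC.
  have Q2 : Qp S2 hH u v := Q_side hs hg tH w1S2 E2.
  have t2 : twoEC S2 hH :=
    twoEC_of_Q hs Q2 (fun c d => other c d hs hg tH nuv uS1 uS2 vS2 c12 c21 E1 E2).
  exists S2; split => //.
  by apply: comps_twoEC => //; apply/set0Pn; exists u.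
- exact: (part2_side sg sp (cg u) (cg v) w1S1 w1u w1v w2S1 w2u w2v E1).
Qed.

End Aux.

Theorem lemma11 (T : finType) (g : rel T) (u v : T) (V1 V2 : {set T})
    (hH : rel T) :
  simple_graph g ->
  two_vertex_connected g ->
  no_irrelevant_edges g ->
  two_vertex_cut g u v ->
  V1 :|: V2 = ~: [set u; v] ->
  V1 :&: V2 = set0 ->
  V1 != set0 -> V2 != set0 ->
  (forall x y, x \in V1 -> y \in V2 -> ~~ g x y) ->
  spanning_2EC_subgraph g hH ->
  let S1 := V1 :|: [set u; v] in
  let S2 := V2 :|: [set u; v] in
  ([/\ typeABC S1 hH u v, typeABC S2 hH u v,
       typeC S1 hH u v -> typeA S2 hH u v &
       typeC S2 hH u v -> typeA S1 hH u v])
  /\ part2 g hH S1 u v /\ part2 g hH S2 u v.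
Proof.
move=> sg tvc nie [uv _] cov disj n1 n2 noE sp S1 S2.
have [gs _] := sg.
have [A1 C1 P1] := side sg tvc uv cov disj n1 n2 noE sp.
have cov' : V2 :|: V1 = ~: [set u; v] by rewrite setUC.
have disj' : V2 :&: V1 = set0 by rewrite setIC.
have noE' : forall x y, x \in V2 -> y \in V1 -> ~~ g x y.
  by move=> x y xV yV; rewrite gs; exact: noE.
have [A2 C2 P2] := side sg tvc uv cov' disj' n2 n1 noE' sp.
by split; [split|split].
Qed.
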